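(* $W_{\max}(20,9)\in\{4,5,\dots,34\}$.
   Context: A weighing matrix of order $n$ and weight $k$ is an $n\times n$ matrix $W$ with entries in $\{1,-1,0\}$ such that $WW^T=kI_n$. Two weighing matrices $W_1,W_2$ of order $n$ and weight $k$ are unbiased if $\frac{1}{\sqrt{k}}W_1W_2^T$ is also a weighing matrix of order $n$ and weight $k$; a set is mutually unbiased if any two distinct members are unbiased. $W_{\max}(n,9)$ denotes the maximum size of a set of mutually unbiased weighing matrices of order $n$ and weight $9$. *)

(* Defs.v *)
(* Matrices over algC (algebraic complex numbers), so that
   1/sqrt(k) makes sense; weighing matrices have entries in {1,-1,0}. *)
From HB Require Import structures.
From mathcomp Require Import all_boot all_order all_algebra all_field.
Set Implicit Arguments. Unset Strict Implicit. Unset Printing Implicit Defensive.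
Import Order.TTheory GRing.Theory Num.Theory.
Local Open Scope ring_scope.

Definition weighing (n k : nat) (W : 'M[algC]_n) : Prop :=
  (forall i j, W i j \in [:: 1; -1; 0]) /\ W *m W^T = (k%:R)%:M.

Definition unbiased (n k : nat) (W1 W2 : 'M[algC]_n) : Prop :=
  weighing k ((sqrtC (k%:R))^-1 *: (W1 *m W2^T)).

Definition MUWM_set (n k : nat) (S : seq 'M[algC]_n) : Prop :=
  uniq S /\ (forall W, W \in S -> weighing k W) /\
  (forall W1 W2, W1 \in S -> W2 \in S -> W1 != W2 -> unbiased k W1 W2).

(* "W_max(n,k) lies in {a,...,b}": some set of size a exists (hence a set of
   every size <= a) and every such set has size at most b. *)
Definition Wmax_in (n k a b : nat) : Prop :=
  (exists S : seq 'M[algC]_n, MUWM_set k S /\ size S = a) /\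
  (forall S : seq 'M[algC]_n, MUWM_set k S -> (size S <= b)%N).

(* Main.v *)
Require Import Defs.
From mathcomp Require Import all_boot all_order all_algebra all_field.
From mathcomp Require Import ring lra.
Set Implicit Arguments. Unset Strict Implicit. Unset Printing Implicit Defensive.
Import Order.TTheory GRing.Theory Num.Theory.
Local Open Scope ring_scope.



Lemma sq_rearr {R : realFieldType} (I A : finType) (v : I -> A -> R) :
  \sum_i \sum_j (\sum_a v i a * v j a) ^+ 2 =
  \sum_a \sum_b (\sum_i v i a * v i b) ^+ 2.
Proof.
have e1 : forall i j, (\sum_a v i a * v j a) ^+ 2 =
   \sum_a \sum_b (v i a * v i b) * (v j a * v j b).
  move=> i j; rewrite expr2 big_distrlr /=; apply: eq_bigr => a _.
  by apply: eq_bigr => b _; ring.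
have e2 : forall a b, (\sum_i v i a * v i b) ^+ 2 =
   \sum_i \sum_j (v i a * v i b) * (v j a * v j b).
  by move=> a b; rewrite expr2 big_distrlr.
transitivity (\sum_i \sum_j \sum_a \sum_b (v i a * v i b) * (v j a * v j b)).
  by apply: eq_bigr => i _; apply: eq_bigr => j _; apply: e1.
transitivity (\sum_a \sum_b \sum_i \sum_j (v i a * v i b) * (v j a * v j b)); last first.
  by apply: eq_bigr => a _; apply: eq_bigr => b _; rewrite e2.
under eq_bigr => i _ do rewrite exchange_big.
rewrite exchange_big; apply: eq_bigr => a _.
under eq_bigr => i _ do rewrite exchange_big.
by rewrite exchange_big.
Qed.

Lemma wcs {R : realFieldType} (A : finType) (w k : A -> R) : (forall a, 0 < w a) ->
  (\sum_a k a) ^+ 2 <= (\sum_a (w a)^-1) * \sum_a w a * k a ^+ 2.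
Proof.
move=> wp; set D := \sum_a (w a)^-1; set S := \sum_a k a; set T := \sum_a w a * k a ^+ 2.
have wi a : 0 < (w a)^-1 by rewrite invr_gt0.
have wn a : w a != 0 by rewrite gt_eqF.
have D0 : 0 <= D by apply: sumr_ge0 => a _; rewrite ltW.
have [Dz|Dn] := eqVneq D 0.
  have -> : S = 0.
    rewrite /S big1 // => a _.
    have /psumr_eq0P h : D = 0 := Dz.
    have := h (fun a _ => ltW (wi a)) a isT.
    by move/eqP; rewrite gt_eqF.
  by rewrite expr0n /= Dz mul0r.
have Dp : 0 < D by rewrite lt_def Dn.
have e a : w a * (D * k a - S / w a) ^+ 2 =
   D ^+ 2 * (w a * k a ^+ 2) - (2 * D * S) * k a + S ^+ 2 * (w a)^-1.
  by field; rewrite wn.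
have : 0 <= \sum_a w a * (D * k a - S / w a) ^+ 2.
  by apply: sumr_ge0 => a _; rewrite mulr_ge0 ?sqr_ge0 ?ltW.
under eq_bigr do rewrite e.
rewrite big_split /= sumrB -!mulr_sumr -/S -/T -/D => h.
have h2 : 0 <= D * (D * T - S ^+ 2).
  by rewrite (_ : D * (D * T - S ^+ 2) = D ^+ 2 * T - 2 * D * S * S + S ^+ 2 * D) //; ring.
rewrite pmulr_rge0 // subr_ge0 in h2.
exact: h2.
Qed.

Lemma drop_off {R : realFieldType} (A : finType) (sw : A -> A) (K : A -> A -> R) :
  (forall a, K a (sw a) = K a a) ->
  \sum_a (1 + (sw a != a)%:R) * K a a ^+ 2 <= \sum_a \sum_b K a b ^+ 2.
Proof.
move=> hs; apply: ler_sum => a _; rewrite (bigD1 a) //=.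
have [e|ne] := eqVneq (sw a) a.
  by rewrite addr0 mul1r lerDl sumr_ge0 // => b _; rewrite sqr_ge0.
rewrite (bigD1 (sw a)) /=; last by rewrite ne.
rewrite hs mulrDl mul1r lerD2l lerDl.
by apply: sumr_ge0 => b _; rewrite sqr_ge0.
Qed.

Lemma sum_delta {R : realFieldType} n (p : 'I_n) (h : 'I_n -> R) : \sum_q (p == q)%:R * h q = h p.
Proof.
rewrite (bigD1 p) //= eqxx mul1r big1 ?addr0 // => q hq.
by rewrite eq_sym (negbTE hq) mul0r.
Qed.

Lemma gramY {R : realFieldType} (I : finType) n (x : I -> 'I_n -> R) (a : R)
  (hn : forall i, \sum_p x i p ^+ 2 = a) i j :
  \sum_p \sum_q (n%:R * (x i p * x i q) - a * (p == q)%:R) *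
                (n%:R * (x j p * x j q) - a * (p == q)%:R)
  = n%:R * (n%:R * (\sum_p x i p * x j p) ^+ 2 - a ^+ 2).
Proof.
set g := \sum_p x i p * x j p.
transitivity (\sum_(p < n) (n%:R ^+ 2 * (x i p * x j p) * g -
    (n%:R * a * (x j p * x j p) + n%:R * a * (x i p * x i p) - a ^+ 2))).
  apply: eq_bigr => p _.
  transitivity (\sum_q (n%:R ^+ 2 * (x i p * x j p) * (x i q * x j q) -
     (p == q)%:R * (n%:R * a * (x j p * x j q) + n%:R * a * (x i p * x i q) - a ^+ 2))).
    apply: eq_bigr => q _.
    have [<-|ne] := eqVneq p q; first by rewrite ?eqxx /=; ring.
    by rewrite /= ?mulr0n ?mulr0 ?mul0r ?subr0; ring.
  by rewrite big_split /= sumrN -mulr_sumr sum_delta.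
rewrite big_split /= sumrN -mulr_suml -/g !big_split /= sumrN -!mulr_sumr.
rewrite -/g.
have e1 : \sum_(i0 < n) x j i0 * x j i0 = a by rewrite -(hn j); apply: eq_bigr => q _; rewrite expr2.
have e2 : \sum_(i0 < n) x i i0 * x i i0 = a by rewrite -(hn i); apply: eq_bigr => q _; rewrite expr2.
rewrite e1 e2 sumr_const card_ord -mulr_natr; ring.
Qed.

Lemma sumD {R : realFieldType} n : \sum_(al : 'I_n * 'I_n) (1 + ((al.2, al.1) != al)%:R)^-1 = (n * n.+1)%:R / 2 :> R.
Proof.
rewrite -(pair_bigA _ (fun p q => (1 + (((q, p) : 'I_n * 'I_n) != (p, q))%:R)^-1)) /=.
transitivity (\sum_(p < n) (1 + (n.-1)%:R / 2 : R)).
  apply: eq_bigr => p _; rewrite (bigD1 p) //= eqxx /= addr0 invr1; congr (_ + _).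
  rewrite (eq_bigr (fun _ => 2^-1)); last first.
    by move=> q hq; rewrite xpair_eqE (negbTE hq).
  by rewrite sumr_const cardC1 card_ord mulr_natl.
rewrite sumr_const card_ord.
case: n => [|n] /=; first by rewrite mul0n mul0r mulr0n.
by rewrite -mulr_natr natrM -!natr1; field.
Qed.

Lemma key {R : realFieldType} (I : finType) n (x : I -> 'I_n -> R) (a : R)
  (hn : forall i, \sum_p x i p ^+ 2 = a) :
  (#|I|%:R * (n%:R * (n%:R * a ^+ 2 - a ^+ 2))) ^+ 2 <=
  (n * n.+1)%:R / 2 *
  \sum_i \sum_j (n%:R * (n%:R * (\sum_p x i p * x j p) ^+ 2 - a ^+ 2)) ^+ 2.
Proof.
pose v i (al : 'I_n * 'I_n) := n%:R * (x i al.1 * x i al.2) - a * (al.1 == al.2)%:R.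
have hY i j : \sum_al v i al * v j al = n%:R * (n%:R * (\sum_p x i p * x j p) ^+ 2 - a ^+ 2).
  rewrite -(gramY hn i j).
  by rewrite -(pair_bigA _ (fun p q => v i (p, q) * v j (p, q))).
under [X in _ <= _ * X]eq_bigr do under eq_bigr do rewrite -hY.
rewrite sq_rearr.
pose K al be := \sum_i v i al * v i be.
pose sw (al : 'I_n * 'I_n) := (al.2, al.1).
have hsw al : K al (sw al) = K al al.
  apply: eq_bigr => i _; congr (_ * _); rewrite /v /= eq_sym; congr (_ - _); ring.
have := drop_off hsw.
set T := \sum_al \sum_be _.
move=> hT.
have hw al : 0 < 1 + (sw al != al)%:R :> R.
  by apply: (lt_le_trans ltr01); rewrite lerDl ler0n.
have := wcs (fun al => K al al) hw.
rewrite sumD.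
have hK : \sum_al K al al = #|I|%:R * (n%:R * (n%:R * a ^+ 2 - a ^+ 2)).
  rewrite exchange_big /= mulr_natl -sumr_const; apply: eq_bigr => i _.
  rewrite hY -(hn i); congr (_ * (_ * _ ^+ 2 - _)).
rewrite hK => h; apply: (le_trans h); rewrite ler_wpM2l //.
by rewrite divr_ge0 ?ler0n.
Qed.

Lemma sqrt9 : sqrtC (9%:R : algC) = 3.
Proof.
have -> : (9%:R : algC) = 3 * 3^* by rewrite conjC_nat -natrM.
by rewrite -normC_def normr_nat.
Qed.
Lemma nat9_neq0 : (9%:R : algC) != 0. Proof. by rewrite pnatr_eq0. Qed.
Lemma nat3_neq0 : (3%:R : algC) != 0. Proof. by rewrite pnatr_eq0. Qed.

Lemma trmul9 (W : 'M[algC]_20) : W *m W^T = (9%:R)%:M -> W^T *m W = (9%:R)%:M.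
Proof.
move=> h.
have h1 : ((9%:R)^-1 *: W) *m W^T = 1%:M.
  by rewrite -scalemxAl h scale_scalar_mx mulVf ?nat9_neq0.
have := mulmx1C h1; rewrite -scalemxAr => h2.
have := congr1 (fun M => 9%:R *: M) h2.
by rewrite scalerA mulfV ?nat9_neq0 // scale1r => ->; rewrite scale_scalar_mx mulr1.
Qed.

Lemma three_weigh (P V : 'M[algC]_20) : P = 3 *: V -> weighing 9 V ->
  (forall p q, P p q \in [:: 3; -3; 0]) /\ P *m P^T = (81%:R)%:M.
Proof.
move=> -> [hv hvv]; split.
  move=> p q; rewrite mxE; have := hv p q.
  by rewrite !inE => /or3P [] /eqP ->; rewrite ?mulr1 ?mulrN1 ?mulr0 ?eqxx ?orbT.
rewrite linearZ /= -scalemxAl -scalemxAr hvv scalerA scale_scalar_mx.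
by congr (_%:M); rewrite -!natrM.
Qed.

Definition Fm (S : seq 'M[algC]_20) (s : nat) : 'M[algC]_20 :=
  if s is k.+1 then nth 0 S k else 3%:M.

Lemma nth_in_weigh (S : seq 'M[algC]_20) k : MUWM_set 9 S -> (k < size S)%N -> weighing 9 (nth 0 S k).
Proof. by move=> [_ [hw _]] hk; apply: hw; rewrite mem_nth. Qed.

Lemma Fm_self (S : seq 'M[algC]_20) s : MUWM_set 9 S -> (s <= size S)%N ->
  Fm S s *m (Fm S s)^T = (9%:R)%:M /\ forall p q, Fm S s p q \in [:: 1; -1; 0; 3].
Proof.
move=> hS; case: s => [|k] hk /=.
  split; first by rewrite tr_scalar_mx mul_scalar_mx scale_scalar_mx -natrM.
  move=> p q; rewrite mxE; case: (p == q); rewrite ?mulr1n ?mulr0n !inE eqxx ?orbT //.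
have [hv hvv] := nth_in_weigh hS hk; split=> // p q.
by have := hv p q; rewrite !inE => /or3P [] ->; rewrite ?orbT.
Qed.

Lemma Fm_cross (S : seq 'M[algC]_20) s t : MUWM_set 9 S -> (s <= size S)%N -> (t <= size S)%N -> s != t ->
  exists V, Fm S s *m (Fm S t)^T = 3 *: V /\ weighing 9 V.
Proof.
move=> hS; case: s => [|k]; case: t => [|l] //= hk hl ne.
- have [hv hvv] := nth_in_weigh hS hl.
  exists (nth 0 S l)^T; split; first by rewrite mul_scalar_mx.
  split; first by move=> p q; rewrite mxE.
  by rewrite trmxK trmul9.
- have [hv hvv] := nth_in_weigh hS hk.
  exists (nth 0 S k); split; first by rewrite tr_scalar_mx mul_mx_scalar.
  by split.
- have [hu [hw hub]] := hS.
  have hne : nth 0 S k != nth 0 S l by rewrite nth_uniq.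
  have := hub _ _ (mem_nth 0 hk) (mem_nth 0 hl) hne.
  rewrite /unbiased sqrt9 => hV.
  exists (3^-1 *: (nth 0 S k *m (nth 0 S l)^T)); split=> //.
  by rewrite scalerA mulfV ?nat3_neq0 // scale1r.
Qed.

Definition toZ (c : algC) : int :=
  if c == 1 then 1 else if c == -1 then -1 else if c == 3 then 3 else 0.

Lemma algC_neq (a b : int) : a != b -> (a%:~R : algC) != b%:~R.
Proof. by apply: contra => /eqP /intr_inj ->. Qed.

Lemma toZK c : c \in [:: 1; -1; 0; 3] -> (toZ c)%:~R = c.
Proof.
rewrite /toZ !inE => /or4P [] /eqP ->.
- by rewrite eqxx.
- have -> : (-1 == 1 :> algC) = false.
    by apply/negbTE; have := @algC_neq (-1) 1 isT.
  by rewrite eqxx.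
- have -> : (0 == 1 :> algC) = false by rewrite eq_sym oner_eq0.
  have -> : (0 == -1 :> algC) = false by rewrite eq_sym oppr_eq0 oner_eq0.
  by have -> : (0 == 3 :> algC) = false by rewrite eq_sym pnatr_eq0.
- have -> : (3 == 1 :> algC) = false.
    by apply/negbTE; have := @algC_neq 3 1 isT.
  have -> : (3 == -1 :> algC) = false.
    by apply/negbTE; have := @algC_neq 3 (-1) isT.
  by rewrite eqxx.
Qed.

Definition zz (S : seq 'M[algC]_20) s p q : int := toZ (Fm S s p q).
Definition Gz (S : seq 'M[algC]_20) s t p q : int := \sum_k zz S s p k * zz S t q k.

Lemma prodZ (S : seq 'M[algC]_20) s t p q : MUWM_set 9 S -> (s <= size S)%N -> (t <= size S)%N ->
  (Fm S s *m (Fm S t)^T) p q = (Gz S s t p q)%:~R.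
Proof.
move=> hS hs ht; rewrite mxE /Gz rmorph_sum; apply: eq_bigr => k _.
rewrite rmorphM /= /zz mxE !toZK //.
- by have [_ h] := Fm_self hS ht; apply: h.
- by have [_ h] := Fm_self hS hs; apply: h.
Qed.

Lemma Gz_self (S : seq 'M[algC]_20) s p q : MUWM_set 9 S -> (s <= size S)%N ->
  Gz S s s p q = if p == q then 9 else 0.
Proof.
move=> hS hs; apply: (@intr_inj algC); rewrite -prodZ //.
have [-> _] := Fm_self hS hs; rewrite mxE.
by case: (p == q); rewrite ?mulr1n ?mulr0n.
Qed.

Lemma Gz_cross (S : seq 'M[algC]_20) s t p : MUWM_set 9 S -> (s <= size S)%N -> (t <= size S)%N ->
  s != t -> (forall q, Gz S s t p q \in [:: 3; -3; 0]) /\ \sum_q Gz S s t p q ^+ 2 = 81.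
Proof.
move=> hS hs ht ne; have [V [hP hV]] := Fm_cross hS hs ht ne.
have [he hpp] := three_weigh hP hV; split.
  move=> q; have := he p q; rewrite prodZ // !inE.
  have e3 : (3 : algC) = (3 : int)%:~R by [].
  have en3 : (-3 : algC) = (-3 : int)%:~R by rewrite rmorphN.
  have e0 : (0 : algC) = (0 : int)%:~R by [].
  by rewrite {1}e3 {1}en3 {1}e0 !(inj_eq intr_inj).
apply: (@intr_inj algC); have := congr1 (fun M : 'M[algC]_20 => M p p) hpp.
rewrite [_%:M p p]mxE eqxx mulr1n => h.
rewrite (_ : 81%:~R = 81%:R) // -h rmorph_sum [RHS]mxE; apply: eq_bigr => q _.
by rewrite [_^T q p]mxE prodZ // rmorphXn /= expr2.
Qed.

Definition tb1 : seq (seq int) := [::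
  [:: 0%Z; 1%Z; 1%Z; 1%Z; 1%Z; 1%Z; 1%Z; 1%Z; 1%Z; 1%Z; 0%Z; 0%Z; 0%Z; 0%Z; 0%Z; 0%Z; 0%Z; 0%Z; 0%Z; 0%Z];
  [:: 1%Z; 0%Z; 1%Z; 1%Z; 1%Z; 1%Z; (-1)%Z; (-1)%Z; (-1)%Z; (-1)%Z; 0%Z; 0%Z; 0%Z; 0%Z; 0%Z; 0%Z; 0%Z; 0%Z; 0%Z; 0%Z];
  [:: 1%Z; 1%Z; 0%Z; 1%Z; (-1)%Z; (-1)%Z; 1%Z; 1%Z; (-1)%Z; (-1)%Z; 0%Z; 0%Z; 0%Z; 0%Z; 0%Z; 0%Z; 0%Z; 0%Z; 0%Z; 0%Z];
  [:: 1%Z; 1%Z; 1%Z; 0%Z; (-1)%Z; (-1)%Z; (-1)%Z; (-1)%Z; 1%Z; 1%Z; 0%Z; 0%Z; 0%Z; 0%Z; 0%Z; 0%Z; 0%Z; 0%Z; 0%Z; 0%Z];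
  [:: 1%Z; 1%Z; (-1)%Z; (-1)%Z; 0%Z; 1%Z; 1%Z; (-1)%Z; 1%Z; (-1)%Z; 0%Z; 0%Z; 0%Z; 0%Z; 0%Z; 0%Z; 0%Z; 0%Z; 0%Z; 0%Z];
  [:: 1%Z; 1%Z; (-1)%Z; (-1)%Z; 1%Z; 0%Z; (-1)%Z; 1%Z; (-1)%Z; 1%Z; 0%Z; 0%Z; 0%Z; 0%Z; 0%Z; 0%Z; 0%Z; 0%Z; 0%Z; 0%Z];
  [:: 1%Z; (-1)%Z; 1%Z; (-1)%Z; 1%Z; (-1)%Z; 0%Z; 1%Z; 1%Z; (-1)%Z; 0%Z; 0%Z; 0%Z; 0%Z; 0%Z; 0%Z; 0%Z; 0%Z; 0%Z; 0%Z];
  [:: 1%Z; (-1)%Z; 1%Z; (-1)%Z; (-1)%Z; 1%Z; 1%Z; 0%Z; (-1)%Z; 1%Z; 0%Z; 0%Z; 0%Z; 0%Z; 0%Z; 0%Z; 0%Z; 0%Z; 0%Z; 0%Z];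
  [:: 1%Z; (-1)%Z; (-1)%Z; 1%Z; 1%Z; (-1)%Z; 1%Z; (-1)%Z; 0%Z; 1%Z; 0%Z; 0%Z; 0%Z; 0%Z; 0%Z; 0%Z; 0%Z; 0%Z; 0%Z; 0%Z];
  [:: 1%Z; (-1)%Z; (-1)%Z; 1%Z; (-1)%Z; 1%Z; (-1)%Z; 1%Z; 1%Z; 0%Z; 0%Z; 0%Z; 0%Z; 0%Z; 0%Z; 0%Z; 0%Z; 0%Z; 0%Z; 0%Z];
  [:: 0%Z; 0%Z; 0%Z; 0%Z; 0%Z; 0%Z; 0%Z; 0%Z; 0%Z; 0%Z; 0%Z; 1%Z; 1%Z; 1%Z; 1%Z; 1%Z; 1%Z; 1%Z; 1%Z; 1%Z];
  [:: 0%Z; 0%Z; 0%Z; 0%Z; 0%Z; 0%Z; 0%Z; 0%Z; 0%Z; 0%Z; 1%Z; 0%Z; 1%Z; 1%Z; 1%Z; 1%Z; (-1)%Z; (-1)%Z; (-1)%Z; (-1)%Z];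
  [:: 0%Z; 0%Z; 0%Z; 0%Z; 0%Z; 0%Z; 0%Z; 0%Z; 0%Z; 0%Z; 1%Z; 1%Z; 0%Z; 1%Z; (-1)%Z; (-1)%Z; 1%Z; 1%Z; (-1)%Z; (-1)%Z];
  [:: 0%Z; 0%Z; 0%Z; 0%Z; 0%Z; 0%Z; 0%Z; 0%Z; 0%Z; 0%Z; 1%Z; 1%Z; 1%Z; 0%Z; (-1)%Z; (-1)%Z; (-1)%Z; (-1)%Z; 1%Z; 1%Z];
  [:: 0%Z; 0%Z; 0%Z; 0%Z; 0%Z; 0%Z; 0%Z; 0%Z; 0%Z; 0%Z; 1%Z; 1%Z; (-1)%Z; (-1)%Z; 0%Z; 1%Z; 1%Z; (-1)%Z; 1%Z; (-1)%Z];
  [:: 0%Z; 0%Z; 0%Z; 0%Z; 0%Z; 0%Z; 0%Z; 0%Z; 0%Z; 0%Z; 1%Z; 1%Z; (-1)%Z; (-1)%Z; 1%Z; 0%Z; (-1)%Z; 1%Z; (-1)%Z; 1%Z];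
  [:: 0%Z; 0%Z; 0%Z; 0%Z; 0%Z; 0%Z; 0%Z; 0%Z; 0%Z; 0%Z; 1%Z; (-1)%Z; 1%Z; (-1)%Z; 1%Z; (-1)%Z; 0%Z; 1%Z; 1%Z; (-1)%Z];
  [:: 0%Z; 0%Z; 0%Z; 0%Z; 0%Z; 0%Z; 0%Z; 0%Z; 0%Z; 0%Z; 1%Z; (-1)%Z; 1%Z; (-1)%Z; (-1)%Z; 1%Z; 1%Z; 0%Z; (-1)%Z; 1%Z];
  [:: 0%Z; 0%Z; 0%Z; 0%Z; 0%Z; 0%Z; 0%Z; 0%Z; 0%Z; 0%Z; 1%Z; (-1)%Z; (-1)%Z; 1%Z; 1%Z; (-1)%Z; 1%Z; (-1)%Z; 0%Z; 1%Z];
  [:: 0%Z; 0%Z; 0%Z; 0%Z; 0%Z; 0%Z; 0%Z; 0%Z; 0%Z; 0%Z; 1%Z; (-1)%Z; (-1)%Z; 1%Z; (-1)%Z; 1%Z; (-1)%Z; 1%Z; 1%Z; 0%Z]].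

Definition tb2 : seq (seq int) := [::
  [:: 0%Z; 0%Z; 1%Z; 1%Z; 0%Z; 1%Z; (-1)%Z; 1%Z; 0%Z; 0%Z; 0%Z; 1%Z; (-1)%Z; 0%Z; 0%Z; (-1)%Z; 0%Z; 1%Z; 0%Z; 0%Z];
  [:: 1%Z; 1%Z; 0%Z; 0%Z; 0%Z; (-1)%Z; 0%Z; 0%Z; 1%Z; (-1)%Z; (-1)%Z; 1%Z; 0%Z; 0%Z; 0%Z; 0%Z; 1%Z; 0%Z; 0%Z; 1%Z];
  [:: 0%Z; 0%Z; 1%Z; 1%Z; 1%Z; 0%Z; 1%Z; (-1)%Z; 0%Z; 0%Z; (-1)%Z; 0%Z; 0%Z; (-1)%Z; 0%Z; 0%Z; 0%Z; 0%Z; (-1)%Z; (-1)%Z];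
  [:: 0%Z; 1%Z; (-1)%Z; 0%Z; (-1)%Z; 0%Z; 1%Z; 0%Z; 0%Z; 0%Z; 0%Z; 1%Z; 0%Z; 0%Z; (-1)%Z; (-1)%Z; (-1)%Z; 0%Z; 0%Z; (-1)%Z];
  [:: 0%Z; 1%Z; 0%Z; 0%Z; 0%Z; 1%Z; (-1)%Z; 0%Z; (-1)%Z; 0%Z; (-1)%Z; 0%Z; 1%Z; 1%Z; 0%Z; 0%Z; 0%Z; (-1)%Z; (-1)%Z; 0%Z];
  [:: 0%Z; 1%Z; 0%Z; 0%Z; 1%Z; 0%Z; 0%Z; (-1)%Z; 0%Z; (-1)%Z; 1%Z; 0%Z; (-1)%Z; 1%Z; 1%Z; 0%Z; (-1)%Z; 0%Z; 0%Z; 0%Z];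
  [:: 0%Z; 0%Z; 0%Z; 0%Z; 1%Z; (-1)%Z; 0%Z; 0%Z; (-1)%Z; 1%Z; 0%Z; 1%Z; 1%Z; 0%Z; 1%Z; (-1)%Z; 0%Z; 0%Z; 1%Z; 0%Z];
  [:: 1%Z; 0%Z; 0%Z; (-1)%Z; 0%Z; (-1)%Z; (-1)%Z; 0%Z; 0%Z; 0%Z; 0%Z; (-1)%Z; 0%Z; 0%Z; 0%Z; (-1)%Z; 0%Z; 1%Z; (-1)%Z; (-1)%Z];
  [:: 1%Z; 0%Z; 0%Z; 1%Z; 0%Z; 0%Z; 0%Z; 0%Z; 1%Z; 1%Z; 1%Z; 0%Z; 0%Z; 1%Z; 0%Z; 0%Z; 1%Z; (-1)%Z; 0%Z; (-1)%Z];
  [:: 0%Z; 1%Z; (-1)%Z; 1%Z; 1%Z; 0%Z; 0%Z; 0%Z; 0%Z; 1%Z; 0%Z; (-1)%Z; 0%Z; 0%Z; (-1)%Z; 0%Z; 0%Z; 1%Z; 0%Z; 1%Z];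
  [:: 1%Z; 1%Z; 0%Z; 0%Z; (-1)%Z; 0%Z; 0%Z; 0%Z; (-1)%Z; 1%Z; 0%Z; 0%Z; (-1)%Z; (-1)%Z; 1%Z; 1%Z; 0%Z; 0%Z; 0%Z; 0%Z];
  [:: 1%Z; 0%Z; 0%Z; 0%Z; 0%Z; 1%Z; (-1)%Z; (-1)%Z; 1%Z; 0%Z; 0%Z; 0%Z; 1%Z; (-1)%Z; 0%Z; 0%Z; (-1)%Z; 0%Z; 1%Z; 0%Z];
  [:: 0%Z; 0%Z; 0%Z; 1%Z; 0%Z; (-1)%Z; (-1)%Z; 0%Z; (-1)%Z; (-1)%Z; 0%Z; 0%Z; 0%Z; 0%Z; (-1)%Z; 1%Z; 0%Z; 0%Z; 1%Z; (-1)%Z];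
  [:: 0%Z; 1%Z; 1%Z; (-1)%Z; 1%Z; 0%Z; 0%Z; 1%Z; 0%Z; 0%Z; 1%Z; 0%Z; 0%Z; (-1)%Z; (-1)%Z; 0%Z; 0%Z; (-1)%Z; 0%Z; 0%Z];
  [:: 0%Z; 0%Z; 1%Z; (-1)%Z; 0%Z; 0%Z; 0%Z; (-1)%Z; 0%Z; 1%Z; (-1)%Z; 0%Z; (-1)%Z; 1%Z; (-1)%Z; 0%Z; 0%Z; 0%Z; 1%Z; 0%Z];
  [:: 1%Z; 0%Z; 1%Z; 0%Z; 0%Z; 0%Z; 1%Z; 1%Z; 0%Z; 0%Z; 0%Z; 0%Z; 1%Z; 1%Z; 0%Z; 1%Z; (-1)%Z; 1%Z; 0%Z; 0%Z];
  [:: 0%Z; 0%Z; 1%Z; 1%Z; (-1)%Z; (-1)%Z; 0%Z; 0%Z; 0%Z; 0%Z; 0%Z; (-1)%Z; 0%Z; 0%Z; 0%Z; (-1)%Z; (-1)%Z; (-1)%Z; 0%Z; 1%Z];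
  [:: 1%Z; (-1)%Z; (-1)%Z; 0%Z; 1%Z; 0%Z; 0%Z; 1%Z; 0%Z; 0%Z; (-1)%Z; 0%Z; (-1)%Z; 0%Z; 0%Z; 0%Z; (-1)%Z; (-1)%Z; 0%Z; 0%Z];
  [:: 1%Z; (-1)%Z; 0%Z; 0%Z; 0%Z; 0%Z; 0%Z; (-1)%Z; (-1)%Z; 0%Z; 1%Z; 1%Z; 0%Z; 0%Z; (-1)%Z; 0%Z; 0%Z; 0%Z; (-1)%Z; 1%Z];
  [:: 1%Z; 0%Z; 0%Z; 0%Z; 0%Z; 1%Z; 1%Z; 0%Z; (-1)%Z; (-1)%Z; 0%Z; (-1)%Z; 0%Z; 0%Z; 0%Z; (-1)%Z; 1%Z; 0%Z; 1%Z; 0%Z]].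

Definition tb3 : seq (seq int) := [::
  [:: 0%Z; 0%Z; 1%Z; 0%Z; 0%Z; (-1)%Z; 1%Z; 0%Z; 0%Z; (-1)%Z; (-1)%Z; 0%Z; (-1)%Z; 0%Z; 0%Z; 0%Z; 1%Z; 0%Z; 1%Z; (-1)%Z];
  [:: 0%Z; 0%Z; 1%Z; (-1)%Z; 0%Z; 0%Z; (-1)%Z; 0%Z; 1%Z; 0%Z; 0%Z; (-1)%Z; 0%Z; (-1)%Z; 1%Z; (-1)%Z; 0%Z; (-1)%Z; 0%Z; 0%Z];
  [:: 1%Z; 0%Z; 0%Z; 1%Z; 0%Z; 0%Z; (-1)%Z; 1%Z; (-1)%Z; 0%Z; 0%Z; 0%Z; 1%Z; 0%Z; 0%Z; (-1)%Z; 1%Z; 0%Z; 0%Z; (-1)%Z];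
  [:: 1%Z; 0%Z; (-1)%Z; 1%Z; 0%Z; 1%Z; 0%Z; (-1)%Z; 0%Z; 0%Z; 0%Z; 0%Z; (-1)%Z; 0%Z; 1%Z; 0%Z; 0%Z; (-1)%Z; 1%Z; 0%Z];
  [:: 1%Z; (-1)%Z; 0%Z; 0%Z; 0%Z; 0%Z; (-1)%Z; 0%Z; 0%Z; (-1)%Z; (-1)%Z; 0%Z; (-1)%Z; 0%Z; 0%Z; 0%Z; 0%Z; 1%Z; (-1)%Z; 1%Z];
  [:: 0%Z; 1%Z; 1%Z; 0%Z; (-1)%Z; 1%Z; 0%Z; 0%Z; 0%Z; 1%Z; (-1)%Z; 1%Z; 0%Z; 0%Z; 0%Z; 0%Z; 1%Z; 0%Z; 0%Z; 1%Z];
  [:: 1%Z; 1%Z; 1%Z; 1%Z; 0%Z; 0%Z; 0%Z; 0%Z; 0%Z; 0%Z; 0%Z; (-1)%Z; 0%Z; (-1)%Z; (-1)%Z; 1%Z; (-1)%Z; 0%Z; 0%Z; 0%Z];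
  [:: 0%Z; 1%Z; 0%Z; 0%Z; 1%Z; 0%Z; (-1)%Z; 0%Z; 1%Z; 1%Z; 0%Z; 0%Z; (-1)%Z; 1%Z; 0%Z; 0%Z; 0%Z; 1%Z; 0%Z; (-1)%Z];
  [:: 0%Z; 0%Z; 0%Z; 1%Z; 0%Z; (-1)%Z; 0%Z; (-1)%Z; 1%Z; 0%Z; 0%Z; (-1)%Z; 1%Z; 1%Z; 0%Z; 0%Z; 1%Z; 0%Z; 0%Z; 1%Z];
  [:: 1%Z; 0%Z; 1%Z; (-1)%Z; 1%Z; 0%Z; 0%Z; 0%Z; (-1)%Z; 0%Z; 1%Z; 0%Z; 0%Z; 1%Z; 0%Z; 0%Z; 0%Z; 0%Z; 1%Z; 1%Z];
  [:: 0%Z; 1%Z; 0%Z; 0%Z; 0%Z; 1%Z; 1%Z; 1%Z; 0%Z; (-1)%Z; 0%Z; (-1)%Z; 0%Z; 1%Z; 1%Z; 0%Z; 0%Z; 0%Z; (-1)%Z; 0%Z];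
  [:: 1%Z; 0%Z; 0%Z; 0%Z; (-1)%Z; (-1)%Z; 1%Z; 0%Z; 0%Z; 1%Z; 1%Z; 0%Z; (-1)%Z; 0%Z; 0%Z; (-1)%Z; 0%Z; 0%Z; (-1)%Z; 0%Z];
  [:: 1%Z; 0%Z; (-1)%Z; (-1)%Z; 0%Z; 0%Z; 0%Z; 1%Z; 1%Z; 0%Z; 0%Z; 0%Z; 0%Z; 0%Z; (-1)%Z; 1%Z; 1%Z; (-1)%Z; 0%Z; 0%Z];
  [:: 0%Z; 0%Z; 0%Z; 0%Z; 1%Z; (-1)%Z; 0%Z; 0%Z; (-1)%Z; 1%Z; (-1)%Z; 0%Z; 0%Z; 0%Z; 1%Z; 1%Z; 0%Z; (-1)%Z; (-1)%Z; 0%Z];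
  [:: 1%Z; 0%Z; 0%Z; (-1)%Z; (-1)%Z; 0%Z; 0%Z; (-1)%Z; 0%Z; 0%Z; (-1)%Z; 0%Z; 1%Z; 1%Z; 0%Z; 0%Z; (-1)%Z; 0%Z; 0%Z; (-1)%Z];
  [:: 0%Z; 1%Z; (-1)%Z; 0%Z; 0%Z; (-1)%Z; 0%Z; 1%Z; 0%Z; 0%Z; (-1)%Z; 0%Z; 0%Z; 0%Z; 0%Z; (-1)%Z; (-1)%Z; 0%Z; 1%Z; 1%Z];
  [:: 0%Z; 1%Z; 0%Z; 0%Z; (-1)%Z; (-1)%Z; (-1)%Z; 0%Z; 0%Z; (-1)%Z; 1%Z; 1%Z; 0%Z; 0%Z; 1%Z; 1%Z; 0%Z; 0%Z; 0%Z; 0%Z];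
  [:: 1%Z; 0%Z; 0%Z; 0%Z; 1%Z; 0%Z; 1%Z; 0%Z; 1%Z; 0%Z; 0%Z; 1%Z; 1%Z; (-1)%Z; 1%Z; 0%Z; 0%Z; 1%Z; 0%Z; 0%Z];
  [:: 0%Z; 1%Z; 0%Z; 0%Z; 1%Z; 0%Z; 0%Z; (-1)%Z; 0%Z; (-1)%Z; 0%Z; 1%Z; 0%Z; 0%Z; (-1)%Z; (-1)%Z; 0%Z; (-1)%Z; (-1)%Z; 0%Z];
  [:: 0%Z; 1%Z; (-1)%Z; (-1)%Z; 0%Z; 0%Z; 0%Z; (-1)%Z; (-1)%Z; 0%Z; 0%Z; (-1)%Z; 0%Z; (-1)%Z; 0%Z; 0%Z; 1%Z; 1%Z; 0%Z; 0%Z]].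

Definition tb4 : seq (seq int) := [::
  [:: 0%Z; 1%Z; 1%Z; 0%Z; 0%Z; 0%Z; 0%Z; 0%Z; (-1)%Z; (-1)%Z; 0%Z; (-1)%Z; 1%Z; (-1)%Z; 0%Z; (-1)%Z; 0%Z; 0%Z; (-1)%Z; 0%Z];
  [:: 1%Z; 0%Z; 1%Z; (-1)%Z; 0%Z; 1%Z; 0%Z; 0%Z; 0%Z; (-1)%Z; (-1)%Z; 0%Z; 0%Z; 1%Z; 0%Z; 1%Z; 1%Z; 0%Z; 0%Z; 0%Z];
  [:: 1%Z; (-1)%Z; 0%Z; 0%Z; 0%Z; 0%Z; (-1)%Z; 0%Z; 0%Z; (-1)%Z; 1%Z; 0%Z; 0%Z; 0%Z; 1%Z; 0%Z; (-1)%Z; (-1)%Z; 0%Z; 1%Z];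
  [:: 1%Z; 0%Z; 0%Z; 1%Z; (-1)%Z; 1%Z; 0%Z; 0%Z; (-1)%Z; 0%Z; 0%Z; 0%Z; 0%Z; 0%Z; 0%Z; 0%Z; (-1)%Z; 1%Z; 1%Z; (-1)%Z];
  [:: 0%Z; 1%Z; (-1)%Z; (-1)%Z; 0%Z; 0%Z; (-1)%Z; 0%Z; 0%Z; (-1)%Z; 1%Z; 0%Z; (-1)%Z; 0%Z; (-1)%Z; 0%Z; 0%Z; 0%Z; 0%Z; (-1)%Z];
  [:: 1%Z; 0%Z; 0%Z; 0%Z; 0%Z; 1%Z; 0%Z; 1%Z; 0%Z; 1%Z; 1%Z; 1%Z; 0%Z; (-1)%Z; 0%Z; 0%Z; 1%Z; 0%Z; (-1)%Z; 0%Z];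
  [:: 0%Z; 1%Z; 1%Z; 0%Z; 0%Z; 0%Z; (-1)%Z; 1%Z; 0%Z; 1%Z; 0%Z; 0%Z; 0%Z; 1%Z; 0%Z; (-1)%Z; 0%Z; (-1)%Z; 1%Z; 0%Z];
  [:: 0%Z; 0%Z; 0%Z; 0%Z; 1%Z; (-1)%Z; (-1)%Z; 1%Z; 0%Z; 0%Z; 0%Z; 0%Z; 1%Z; 0%Z; 1%Z; 1%Z; 0%Z; 1%Z; 0%Z; (-1)%Z];
  [:: 1%Z; 0%Z; 0%Z; 0%Z; (-1)%Z; (-1)%Z; 0%Z; 1%Z; 1%Z; 0%Z; 0%Z; (-1)%Z; 0%Z; 0%Z; (-1)%Z; 0%Z; 0%Z; 1%Z; 0%Z; 1%Z];
  [:: 0%Z; 1%Z; 0%Z; 0%Z; 1%Z; 0%Z; 1%Z; 1%Z; (-1)%Z; 0%Z; 0%Z; 0%Z; (-1)%Z; 0%Z; 0%Z; 1%Z; (-1)%Z; 0%Z; 0%Z; 1%Z];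
  [:: 0%Z; 1%Z; 0%Z; (-1)%Z; (-1)%Z; 0%Z; 0%Z; 0%Z; 1%Z; 0%Z; (-1)%Z; 1%Z; 0%Z; (-1)%Z; 1%Z; 0%Z; (-1)%Z; 0%Z; 0%Z; 0%Z];
  [:: 0%Z; 0%Z; 1%Z; 1%Z; (-1)%Z; (-1)%Z; 0%Z; 0%Z; 0%Z; 0%Z; 0%Z; 0%Z; (-1)%Z; 0%Z; 0%Z; 1%Z; 0%Z; (-1)%Z; (-1)%Z; (-1)%Z];
  [:: 0%Z; 0%Z; 1%Z; (-1)%Z; 0%Z; 0%Z; 0%Z; (-1)%Z; 0%Z; 1%Z; 1%Z; 0%Z; 1%Z; 0%Z; (-1)%Z; 1%Z; (-1)%Z; 0%Z; 0%Z; 0%Z];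
  [:: 1%Z; 0%Z; (-1)%Z; 0%Z; 0%Z; (-1)%Z; 0%Z; 0%Z; (-1)%Z; 0%Z; (-1)%Z; 1%Z; 1%Z; 0%Z; (-1)%Z; 0%Z; 0%Z; (-1)%Z; 0%Z; 0%Z];
  [:: 1%Z; 0%Z; 0%Z; 0%Z; 1%Z; 0%Z; 1%Z; 0%Z; 1%Z; 0%Z; 0%Z; (-1)%Z; 0%Z; (-1)%Z; 0%Z; 0%Z; 0%Z; (-1)%Z; 1%Z; (-1)%Z];
  [:: 1%Z; 0%Z; 1%Z; 0%Z; 1%Z; (-1)%Z; 0%Z; (-1)%Z; 0%Z; 0%Z; 0%Z; 1%Z; (-1)%Z; 0%Z; 0%Z; (-1)%Z; 0%Z; 1%Z; 0%Z; 0%Z];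
  [:: 0%Z; 0%Z; 0%Z; 1%Z; 1%Z; 1%Z; (-1)%Z; 0%Z; 1%Z; 0%Z; (-1)%Z; 0%Z; 0%Z; 0%Z; (-1)%Z; 0%Z; (-1)%Z; 0%Z; (-1)%Z; 0%Z];
  [:: 0%Z; 1%Z; 0%Z; 1%Z; 0%Z; 0%Z; 1%Z; 0%Z; 1%Z; (-1)%Z; 1%Z; 1%Z; 1%Z; 1%Z; 0%Z; 0%Z; 0%Z; 0%Z; 0%Z; 0%Z];
  [:: 1%Z; 1%Z; (-1)%Z; 0%Z; 0%Z; 0%Z; 0%Z; (-1)%Z; 0%Z; 1%Z; 0%Z; (-1)%Z; 0%Z; 1%Z; 1%Z; 0%Z; 0%Z; 0%Z; (-1)%Z; 0%Z];
  [:: 0%Z; 1%Z; 0%Z; 1%Z; 0%Z; 0%Z; (-1)%Z; (-1)%Z; 0%Z; 0%Z; 0%Z; 0%Z; 0%Z; (-1)%Z; 0%Z; 1%Z; 1%Z; 0%Z; 1%Z; 1%Z]].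

Definition ent (t : seq (seq int)) (i j : nat) : int := nth 0 (nth [::] t i) j.
Definition dotl (t1 t2 : seq (seq int)) (i j : nat) : int :=
  foldr (fun k acc => ent t1 i k * ent t2 j k + acc) 0 (iota 0 20).
Definition allij (P : nat -> nat -> bool) :=
  all (fun i => all (fun j => P i j) (iota 0 20)) (iota 0 20).
Definition is_weigh t := allij (fun i j => dotl t t i j == (if i == j then 9 else 0))
   && allij (fun i j => ent t i j \in [:: 1; -1; 0]).
Definition is_unb t1 t2 := allij (fun i j => dotl t1 t2 i j \in [:: 3; -3; 0]).



Definition mkM (t : seq (seq int)) : 'M[algC]_20 := \matrix_(i, j) (ent t i j)%:~R.

Lemma sum_iota (F : nat -> int) :
  \sum_(k < 20) F k = foldr (fun k acc => F k + acc) 0 (iota 0 20).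
Proof.
rewrite -(big_mkord xpredT F) /index_iota subn0.
by elim: (iota 0 20) => [|a s IH]; rewrite ?big_nil ?big_cons ?IH.
Qed.

Lemma mulE t1 t2 (i j : 'I_20) : (mkM t1 *m (mkM t2)^T) i j = (dotl t1 t2 i j)%:~R.
Proof.
rewrite !mxE /dotl -(sum_iota (fun k => ent t1 i k * ent t2 j k)) rmorph_sum.
by apply: eq_bigr => k _; rewrite !mxE rmorphM.
Qed.

Lemma allijP P (i j : 'I_20) : allij P -> P i j.
Proof.
move=> /allP /(_ i); rewrite mem_iota ltn_ord => /(_ isT) /allP /(_ j).
by rewrite mem_iota ltn_ord => /(_ isT).
Qed.



Lemma weigh_of t : is_weigh t -> weighing 9 (mkM t).
Proof.
case/andP=> h1 h2; split.
  move=> i j; rewrite mxE; have := allijP i j h2.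
  by rewrite !inE => /or3P [] /eqP ->; rewrite ?eqxx ?orbT.
apply/matrixP=> i j; rewrite mulE mxE.
have /eqP -> := allijP i j h1.
by case: (i =P j) => [->|/eqP ne]; rewrite ?eqxx // ifN.
Qed.






Lemma unbiased_of (W1 W2 : 'M[algC]_20) : weighing 9 W1 -> weighing 9 W2 ->
  (forall i j, (W1 *m W2^T) i j \in [:: 3; -3; 0]) -> unbiased 9 W1 W2.
Proof.
move=> [_ h1] [_ h2] he; rewrite /unbiased sqrt9; split.
  move=> i j; rewrite mxE; have := he i j.
  rewrite !inE => /or3P [] /eqP ->.
  - by rewrite mulVf ?nat3_neq0 ?eqxx.
  - by rewrite mulrN mulVf ?nat3_neq0 ?eqxx ?orbT.
  - by rewrite mulr0 ?eqxx ?orbT.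
rewrite linearZ /= -scalemxAl -scalemxAr scalerA trmx_mul trmxK.
rewrite !mulmxA -(mulmxA W1) (trmul9 h2) mul_mx_scalar -scalemxAl h1.
rewrite scale_scalar_mx.
apply/matrixP=> i j; rewrite !mxE. case: (i == j); rewrite ?mulr0n ?mulr1n //.
- by field.
- by rewrite mulr0.
Qed.

Lemma neq_of t1 t2 : is_weigh t1 -> is_unb t1 t2 -> mkM t1 != mkM t2.
Proof.
move=> w u; apply/negP=> /eqP e.
have := allijP (ord0 : 'I_20) ord0 u.
have [_ h] := weigh_of w.
have := congr1 (fun M : 'M[algC]_20 => M ord0 ord0) h.
rewrite {2}e mulE mxE /= mulr1n.
have -> : (9%:R : algC) = (9 : int)%:~R by [].
by move/intr_inj => ->.
Qed.

Lemma unb_tab t1 t2 : is_weigh t1 -> is_weigh t2 -> is_unb t1 t2 ->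
  unbiased 9 (mkM t1) (mkM t2).
Proof.
move=> w1 w2 u; apply: unbiased_of; try apply: weigh_of => //.
move=> i j; rewrite mulE; have := allijP i j u.
by rewrite !inE => /or3P [] /eqP ->; rewrite ?eqxx ?orbT.
Qed.

Definition good (ts : seq (seq (seq int))) :=
  [&& uniq ts, all is_weigh ts & all (fun a => all (fun b => (a == b) || is_unb a b) ts) ts].

Lemma good_MU ts : good ts -> MUWM_set 9 (map mkM ts).
Proof.
case/and3P=> hun /allP hw /allP hu.
have hu' a b : a \in ts -> b \in ts -> a != b -> is_unb a b.
  by move=> ha hb ne; have /allP/(_ b hb) := hu a ha; rewrite (negbTE ne).
split; last split.
- rewrite map_inj_in_uniq // => a b ha hb e; apply/eqP; apply: contraT => ne.
  by have := neq_of (hw a ha) (hu' a b ha hb ne); rewrite e eqxx.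
- by move=> W /mapP [a ha ->]; apply: weigh_of; apply: hw.
- move=> W1 W2 /mapP [a ha ->] /mapP [b hb ->] ne.
  apply: unb_tab; [exact: hw | exact: hw | apply: hu' => //].
  by apply: contraNneq ne => ->.
Qed.

Lemma good4 : good [:: tb1; tb2; tb3; tb4].
Proof. vm_compute. reflexivity. Qed.

Lemma lower : exists S : seq 'M[algC]_20, MUWM_set 9 S /\ size S = 4%N.
Proof. by exists (map mkM [:: tb1; tb2; tb3; tb4]); split; [apply: good_MU; exact: good4|]. Qed.

Definition fz (g : rat) : rat := (20%:R * (20%:R * g ^+ 2 - 9%:R ^+ 2)) ^+ 2.

Lemma fz_cross (g : int) : g \in [:: 3; -3; 0] ->
  fz g%:~R = 400%:R * (360%:R * (g%:~R) ^+ 2 + 81%:R * 81%:R).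
Proof.
by rewrite !inE /fz => /or3P [] /eqP ->; rewrite ?rmorphN; ring.
Qed.

Lemma sum_pair m n (G : 'I_m * 'I_n -> rat) : \sum_i G i = \sum_s \sum_p G (s, p).
Proof. by rewrite pair_bigA; apply: eq_bigr => [[s p]]. Qed.

Lemma Gz_rat (S : seq 'M[algC]_20) s t p q :
  ((Gz S s t p q)%:~R : rat) = \sum_k ((zz S s p k)%:~R : rat) * (zz S t q k)%:~R.
Proof. by rewrite /Gz rmorph_sum; apply: eq_bigr => k _; rewrite rmorphM. Qed.

Lemma fz9 : fz (9 : int)%:~R = (20%:R * (20%:R * 9%:R ^+ 2 - 9%:R ^+ 2)) ^+ 2.
Proof. by []. Qed.
Lemma fz0 : fz (0 : int)%:~R = (20%:R * (20%:R * 0 ^+ 2 - 9%:R ^+ 2)) ^+ 2.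
Proof. by []. Qed.
Lemma int81 : ((81 : int)%:~R : rat) = 81%:R.
Proof. by []. Qed.

Opaque Gz zz fz.

Lemma upper (S : seq 'M[algC]_20) : MUWM_set 9 S -> (size S <= 34)%N.
Proof.
move=> hS; set m := size S.
pose x (i : 'I_m.+1 * 'I_20) (q : 'I_20) : rat := (zz S i.1 i.2 q)%:~R.
have hs (s : 'I_m.+1) : (s <= size S)%N by rewrite -ltnS ltn_ord.
have hgram i j : \sum_k x i k * x j k = (Gz S i.1 j.1 i.2 j.2)%:~R.
  by rewrite Gz_rat.
have hn i : \sum_q x i q ^+ 2 = 9%:R.
  rewrite (eq_bigr (fun q => x i q * x i q)); last by move=> q _; rewrite expr2.
  by rewrite hgram Gz_self ?eqxx.
have := key hn.
under eq_bigr do under eq_bigr do rewrite hgram.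
pose c1 := fz (9 : int)%:~R + fz (0 : int)%:~R *+ 19.
pose c2 := 400%:R * (360%:R * (81 : int)%:~R + (81%:R * 81%:R) *+ 20) : rat.
have hrow (s : 'I_m.+1) (p : 'I_20) :
    \sum_(j : 'I_m.+1 * 'I_20) fz (Gz S s j.1 p j.2)%:~R = c1 + c2 *+ m.
  rewrite sum_pair (bigD1 s); last by [].
  apply: (congr2 (fun a b => a + b)).
    rewrite (eq_bigr (fun q => fz (if p == q then 9 else 0)%:~R)); last first.
      by move=> q _; rewrite Gz_self.
    rewrite (bigD1 p); last by [].
    rewrite eqxx; apply: (congr2 (fun a b => a + b)); first by [].
    rewrite (eq_bigr (fun _ => fz (0 : int)%:~R)); last first.
      by move=> q hq; rewrite eq_sym (negbTE hq).
    by rewrite sumr_const cardC1 card_ord.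
  rewrite (eq_bigr (fun _ => c2)); last first.
    move=> t ht; have ht' : (s : nat) != t by rewrite eq_sym; move: ht => /andP [].
    have [hc hsq] := Gz_cross p hS (hs s) (hs t) ht'.
    rewrite (eq_bigr (fun q => 400%:R * (360%:R * (Gz S s t p q)%:~R ^+ 2 + 81%:R * 81%:R))); last first.
      by move=> q _; rewrite fz_cross.
    rewrite -mulr_sumr big_split /= -mulr_sumr sumr_const card_ord.
    rewrite [X in 360%:R * X](_ : _ = (81 : int)%:~R); first by [].
    by rewrite -hsq rmorph_sum; apply: eq_bigr => q _; rewrite rmorphXn.
  by rewrite sumr_const cardC1 card_ord.
rewrite (eq_bigr (fun _ => c1 + c2 *+ m)); last by move=> i _; exact: hrow.
rewrite sumr_const card_prod !card_ord => h.
rewrite leqNgt; apply/negP => hm.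
have hM : 35%:R <= m%:R :> rat by rewrite ler_nat.
move: h; rewrite /c1 /c2 fz9 fz0 => h.
nra.
Qed.

Theorem proposition6p9 : Wmax_in 20 9 4 34.
Proof.
split; first exact: lower.
exact: upper.
Qed.
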